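(* Let $\mathcal{A}$ be a MAD family and let $\mathcal{B}=\{s_n:n\in\omega\}$ be a block sequence such that there is no infinite $W\subseteq\omega$ with $\bigcup_{n\in W}s_n\in\mathcal{I}(\mathcal{A})$. Then there are an infinite $X\subseteq\omega$ and a countable $\mathcal{A}_0\subseteq\mathcal{A}$ such that $\mathcal{A}\setminus\mathcal{A}_0\subseteq\mathcal{J}(\mathcal{B}_X)$.
   Context: A MAD family is a maximal family of infinite subsets of $\omega$ with pairwise finite intersections; $\mathcal{I}(\mathcal{A})$ is the ideal generated by $\mathcal{A}$ and the finite sets. A block sequence is $\{s_n:n\in\omega\}$ with each $s_n$ a nonempty finite subset of $\omega$ and $\max s_n<\min s_{n+1}$. For such $\mathcal{B}=\{s_n\}$ and infinite $X\subseteq\omega$, $\mathcal{B}_X=\{s_n:n\in X\}$ (enumerated in increasing order of $n$), and for a block sequence $\{t_k\}$ the ideal $\mathcal{J}(\{t_k\})$ is the set of $A\subseteq\omega$ with $\lim_k |A\cap t_k|/|t_k|=0$. *)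

(* Defs.v *)
From HB Require Import structures.
From mathcomp Require Import all_boot all_order all_algebra.
From mathcomp Require Import all_classical all_reals all_analysis.
From mathcomp Require Import Rstruct Rstruct_topology.
Set Implicit Arguments. Unset Strict Implicit. Unset Printing Implicit Defensive.
Import Order.TTheory GRing.Theory Num.Theory.
Local Open Scope classical_set_scope.
Local Open Scope ring_scope.

Definition AD_family (F : set (set nat)) : Prop :=
  (forall A, F A -> infinite_set A) /\
  (forall A B, F A -> F B -> A <> B -> finite_set (A `&` B)).

Definition MAD_family (F : set (set nat)) : Prop :=
  AD_family F /\ (forall G, AD_family G -> F `<=` G -> G = F).

(* I(A): the ideal generated by A and the finite sets *)
Definition gen_ideal (F : set (set nat)) : set (set nat) :=
  [set Y | exists l : seq (set nat),
      (forall A, A \in l -> F A) /\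
      finite_set (Y `\` \bigcup_(A in [set A | A \in l]) A)].

(* finite nonempty subsets of omega are represented by duplicate-free nonempty lists *)
Definition block_seq (s : nat -> seq nat) : Prop :=
  (forall n, uniq (s n)) /\ (forall n, s n <> [::]) /\
  (forall n x y, x \in s n -> y \in s n.+1 -> (x < y)%N).

Definition card_in (A : set nat) (t : seq nat) : nat :=
  count (fun x => `[< A x >]) t.

Definition J_ideal (t : nat -> seq nat) : set (set nat) :=
  [set A | (fun k => ((card_in A (t k))%:R / (size (t k))%:R : Rdefinitions.R)) @ \oo --> (0 : Rdefinitions.R)].

(* B_X = {s_n : n in X} enumerated increasingly: given the strictly increasing
   enumeration e of X, B_X is the block sequence k |-> s (e k). *)
Definition increasing_enum (X : set nat) (e : nat -> nat) : Prop :=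
  (forall k, (e k < e k.+1)%N) /\ range e = X.

(* Main.v *)
Require Import Defs.
From HB Require Import structures.
From mathcomp Require Import all_boot all_order all_algebra.
From mathcomp Require Import all_classical all_reals all_analysis.
From mathcomp Require Import Rstruct Rstruct_topology.
From mathcomp Require Import zify ring lra.
From Stdlib Require Import Lia.
Import Order.TTheory GRing.Theory Num.Theory.
Local Open Scope classical_set_scope.
Set Implicit Arguments.
Import numFieldNormedType.Exports.

Definition unb (Y : set nat) := forall m, exists n, Y n /\ (m < n)%N.
Definition bigb (B : set nat) (t : seq nat) (j : nat) := (size t <= j.+1 * card_in B t)%N.

Lemma fin_bound (S : set nat) : finite_set S -> exists N, forall n, S n -> (n < N)%N.
Proof.
move=> /finite_seqP[l ->]; elim: l => [|x l [N HN]]; first by exists 0%N.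
exists (maxn N x.+1) => n /=; rewrite inE => /orP[/eqP->|/HN]; lia.
Qed.

Lemma unb_inf Y : unb Y -> infinite_set Y.
Proof.
move=> hu /fin_bound[N HN]; have [n [Yn lt]] := hu N; have := HN _ Yn; lia.
Qed.

Lemma block_ge s : block_seq s -> forall n x, x \in s n -> (n <= x)%N.
Proof.
case=> _ [ne lt]; elim=> [//|n IH] y hy.
case E: (s n) (ne n) => [//|x t] _.
have hx : x \in s n by rewrite E inE eqxx.
have := IH _ hx; have := lt _ _ _ hx hy; lia.
Qed.

Lemma sum_le1 (b : nat -> bool) m :
  (forall i i', (i < m)%N -> (i' < m)%N -> b i -> b i' -> i = i') ->
  (\sum_(i < m) b i <= 1)%N.
Proof.
elim: m => [|m IH] H; first by rewrite big_ord0.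
rewrite big_ord_recr /=; case bm: (b m).
  rewrite big1 // => i _; case bi: (b i) => //.
  have := H _ _ (leqW (ltn_ord i)) (ltnSn m) bi bm; have := ltn_ord i; move=> ? ?; exfalso; lia.
rewrite addn0; apply: IH => i i' hi hi'; apply: H; lia.
Qed.

Lemma sum_count (t : seq nat) m (P : nat -> set nat) :
  (forall x, x \in t -> forall i i', (i < m)%N -> (i' < m)%N -> P i x -> P i' x -> i = i') ->
  (\sum_(i < m) card_in (P i) t <= size t)%N.
Proof.
elim: t => [|x t IH] H; first by rewrite big1.
rewrite /card_in /=. under eq_bigr do rewrite /=.
rewrite big_split /= -addn1 addnC; apply: leq_add.
  by apply: IH => y hy; apply: H; rewrite inE hy orbT.
have := @sum_le1 (fun i => `[< P i x >]) m; apply => i i' hi hi' /asboolP a /asboolP b.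
exact: (H x (mem_head _ _)).
Qed.

Lemma contra_big (A : set (set nat)) s j m (g : nat -> set nat) Y :
  AD_family A -> block_seq s -> m = j.+2 -> unb Y ->
  (forall i, (i < m)%N -> A (g i)) ->
  (forall i i', (i < j.+2)%N -> (i' < j.+2)%N -> i <> i' -> g i <> g i') ->
  (forall n i, Y n -> (i < j.+2)%N -> bigb (g i) (s n) j) -> False.
Proof.
move=> [_ AD] bs hm hu hA hg hbig; subst m.
pose D := [set p : nat * nat | (p.1 < j.+2)%N /\ (p.2 < j.+2)%N /\ p.1 <> p.2].
have fD : finite_set D.
  apply: sub_finite_set (finite_setX (finite_II j.+2) (finite_II j.+2)).
  by move=> [a b] /= [ha [hb _]]; split.
have fP : finite_set (\bigcup_(p in D) (g p.1 `&` g p.2)).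
  apply: bigcup_finite fD _ => -[a b] [ha [hb hab]].
  exact: (AD _ _ (hA a ha) (hA b hb) (hg _ _ ha hb hab)).
have [N HN] := fin_bound fP.
have [n [Yn ltn]] := hu N.
have hs : (\sum_(i < j.+2) card_in (g i) (s n) <= size (s n))%N.
  apply: sum_count => x hx i i' hi hi' gi gi'.
  case: (eqVneq i i') => // ne; exfalso.
  have : (x < N)%N.
    apply: HN; exists (i, i') => //; split => //; split => //; exact/eqP.
  have := block_ge bs _ _ hx; lia.
have hz : (0 < size (s n))%N by case: (s n) (bs.2.1 n).
have : (\sum_(i < j.+2) size (s n) <= j.+1 * \sum_(i < j.+2) card_in (g i) (s n))%N.
  by rewrite big_distrr; apply: leq_sum => i _; apply: hbig.
rewrite sum_nat_const card_ord => h.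
have : (j.+1 * \sum_(i < j.+2) card_in (g i) (s n) <= j.+1 * size (s n))%N by rewrite leq_mul2l hs orbT.
move: h hz; generalize (\sum_(i < j.+2) card_in (g i) (s n))%N (size (s n)) => S z; clear; nia.
Qed.

Lemma key (A : set (set nat)) s j : AD_family A -> block_seq s ->
  forall d m (g : nat -> set nat) (Y : set nat), (m + d)%N = j.+2 -> unb Y ->
  (forall i, (i < m)%N -> A (g i)) ->
  (forall i i', (i < m)%N -> (i' < m)%N -> i <> i' -> g i <> g i') ->
  (forall n i, Y n -> (i < m)%N -> bigb (g i) (s n) j) ->
  exists Y' m' (g' : nat -> set nat), unb Y' /\ Y' `<=` Y /\
    (forall i, (i < m')%N -> A (g' i)) /\
    forall B, A B -> (forall i, (i < m')%N -> B <> g' i) ->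
      exists N, forall n, Y' n -> (N < n)%N -> ~~ bigb B (s n) j.
Proof.
move=> hAD bs; elim=> [|d IH] m g Y hmd hu hA hg hbig.
  have hm : m = j.+2 by lia. subst m. exfalso; exact: (@contra_big A s j j.+2 g Y hAD bs erefl hu hA hg hbig).
have [H|H] := EM (forall B, A B -> (forall i, (i < m)%N -> B <> g i) ->
      exists N, forall n, Y n -> (N < n)%N -> ~~ bigb B (s n) j).
  exists Y, m, g; split; first done; split; first done; split. exact hA. exact H.
move: H => /existsNP[B] /not_implyP[AB] /not_implyP[Bg] /forallNP HB.
pose Y1 := [set n | Y n /\ bigb B (s n) j].
have hu1 : unb Y1.
  move=> N; have /existsNP[n] := HB N; move=> /not_implyP[Yn] /not_implyP[ltn] nb.
  by exists n; split => //; split => //; apply/negPn/negP.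
pose g' := fun i => if i is i'.+1 then g i' else B.
have [Y' [m' [g'' [h1 [h2 h3]]]]] := IH m.+1 g' Y1 ltac:(lia) hu1
  ltac:(by case=> [//|i] /= hi; apply: hA)
  ltac:(by case=> [|i] [|i'] //= hi hi' hne; [apply: Bg| move=> e; apply: (Bg i) => //; rewrite e | apply: hg; lia])
  ltac:(by move=> n [|i] [Yn bn] hi //=; apply: hbig).
exists Y', m', g''; split => //; split => //.
by move=> n /h2[].
Qed.

Local Open Scope ring_scope.

Theorem mainTheorem16 (A : set (set nat)) (s : nat -> seq nat) :
  MAD_family A ->
  block_seq s ->
  ~ (exists W : set nat, infinite_set W /\
       gen_ideal A (\bigcup_(n in W) [set x | x \in s n])) ->
  exists (X : set nat) (A0 : set (set nat)),
    infinite_set X /\ countable A0 /\ A0 `<=` A /\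
    exists e : nat -> nat, increasing_enum X e /\
      A `\` A0 `<=` J_ideal (fun k => s (e k)).
Proof.
move=> [hAD _] bs _.
have step : forall p : set nat * nat, exists q : set nat * (nat * (nat -> set nat)),
  unb p.1 -> unb q.1 /\ q.1 `<=` p.1 /\ (forall i, (i < q.2.1)%N -> A (q.2.2 i)) /\
    forall B, A B -> (forall i, (i < q.2.1)%N -> B <> q.2.2 i) ->
      exists N, forall n, q.1 n -> (N < n)%N -> ~~ bigb B (s n) p.2.
  move=> [Y j] /=; have [hu|nu] := EM (unb Y); last first.
    by exists (set0, (0%N, fun _ => set0)).
  have [Y' [m' [g' H]]] := @key A s j hAD bs j.+2 0 (fun _ => set0) Y (erefl _) hu
    ltac:(by []) ltac:(by []) ltac:(by []).
  by exists (Y', (m', g')).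
have [F HF] := choice step.
pose Ys := fix Ys (k : nat) : set nat :=
  match k with 0 => (F (setT, 0%N)).1 | k'.+1 => (F (Ys k', k'.+1)).1 end.
pose prev k := match k with 0 => setT | k'.+1 => Ys k' end.
have YsE : forall k, Ys k = (F (prev k, k)).1 by case.
have unbT : unb setT by move=> m; exists m.+1.
have Hk : forall k, unb (prev k) /\ unb (Ys k).
  elim=> [|k [_ IH]]; first by split => //; rewrite YsE; have [] := HF (setT, 0%N) unbT.
  split => //; rewrite YsE; have [] := HF (prev k.+1, k.+1) IH => //.
have Ysub : forall j k, (j <= k)%N -> Ys k `<=` Ys j.
  move=> j; elim=> [|k IH] hjk; first by have -> : j = 0%N by lia.
  case: (eqVneq j k.+1) => [->//|ne].
  apply: subset_trans (IH ltac:(lia)); rewrite YsE.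
  by have [_ []] := HF (prev k.+1, k.+1) (Hk k.+1).1.
have pick : forall p : set nat * nat, exists x, unb p.1 -> p.1 x /\ (p.2 < x)%N.
  move=> [Y m]; have [hu|nu] := EM (unb Y); last by exists 0%N.
  by have [n hn] := hu m; exists n.
have [P HP] := choice pick.
pose e := fix e (k : nat) : nat :=
  match k with 0 => P (Ys 0%N, 0%N) | k'.+1 => P (Ys k'.+1, e k') end.
have eY : forall k, Ys k (e k).
  by case=> [|k]; [have [] := HP (Ys 0%N, 0%N) (Hk 0%N).2 | have [] := HP (Ys k.+1, e k) (Hk k.+1).2].
have einc : forall k, (e k < e k.+1)%N by move=> k; have [] := HP (Ys k.+1, e k) (Hk _).2.
have ege : forall k, (k <= e k)%N by elim=> [//|k IH]; have := einc k; lia.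
pose m k := (F (prev k, k)).2.1.
pose g k := (F (prev k, k)).2.2.
exists (range e), (\bigcup_(k in setT) \bigcup_(i in `I_(m k)) [set g k i]).
split.
  apply: unb_inf => n; exists (e n.+1); split; first by exists n.+1.
  by have := ege n.+1; lia.
split.
  apply: bigcup_countable => // k _; apply: bigcup_countable => [|i _].
    exact/finite_set_countable/finite_II.
  exact: countable1.
split.
  move=> B [k _ [i hi ->]]; have [_ [_ [hA _]]] := HF (prev k, k) (Hk k).1.
  exact: hA.
exists e; split; first by split.
move=> B [AB nB].
have hN : forall j, exists N, forall k, (N <= k)%N -> ~~ bigb B (s (e k)) j.
  move=> j; have [_ [_ [_ H]]] := HF (prev j, j) (Hk j).1.
  have [N HN] := H B AB ltac:(by move=> i hi eBi; apply: nB; exists j => //; exists i => //).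
  exists (maxn j N.+1) => k hk; apply: HN; last by have := ege k; lia.
  rewrite -YsE; apply: (Ysub j k) => //; lia.
rewrite /J_ideal /=.
apply/(@cvgrPdist_lt _ Rdefinitions.R^o) => eps eps0.
have [j hj] : exists j, (j.+1%:R : Rdefinitions.R)^-1 < eps.
  have := near_infty_natSinv_lt (PosNum eps0); move=> [N _ HN]; exists N; exact: (HN N (leqnn N)).
have [N HN] := hN j.
exists N => // k /= hk.
have := HN k hk; rewrite /bigb -ltnNge.
set c := card_in B (s (e k)); set z := size (s (e k)) => hcz.
have z0 : (0 < z)%N by rewrite /z; case: (s (e k)) (bs.2.1 (e k)).
have z0' : (0 : Rdefinitions.R) < z%:R by rewrite ltr0n.
rewrite sub0r normrN ger0_norm; last by rewrite divr_ge0 // ler0n.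
rewrite ltr_pdivrMr //.
have t0 : (0 : Rdefinitions.R) < j.+1%:R by rewrite ltr0n.
have h1 : (j.+1 * c)%:R < z%:R :> Rdefinitions.R by rewrite ltr_nat.
rewrite natrM in h1.
have h2 : (j.+1%:R)^-1 * (j.+1%:R * c%:R) < (j.+1%:R)^-1 * z%:R :> Rdefinitions.R.
  by rewrite ltr_pM2l // invr_gt0.
rewrite mulrA mulVf ?mul1r in h2; last by rewrite gt_eqF.
apply: (lt_trans h2); rewrite ltr_pM2r //.
Qed.
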